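(* Let $N\ge1$, $0\le k\le N$, and $I=\{N-k+1,\dots,N\}$. Then, as polynomials in $\xi_1,\dots,\xi_N$, \[ \sum_{\substack{J\subset\{1,\dots,N\}\\|J|=k}}\operatorname{sgn}(I,J)\prod_{i\in J}(\xi_i-1)^{N-k}\prod_{\substack{i<j\\ i,j\in J}}(\xi_j-\xi_i)\prod_{\substack{i<j\\ i,j\in J^c}}(\xi_j-\xi_i)=\prod_{1\le i<j\le N}(\xi_j-\xi_i). \]
   Context: For $I,J\subset\{1,\dots,N\}$ with $|I|=|J|=k$, write $I=\{i_1<\dots<i_k\}$, $I^c=\{1,\dots,N\}\setminus I=\{i_{k+1}<\dots<i_N\}$, $J=\{j_1<\dots<j_k\}$, $J^c=\{j_{k+1}<\dots<j_N\}$; $\operatorname{sgn}(I,J)$ is the sign of the permutation sending $i_m\mapsto j_m$ for $m=1,\dots,N$. *)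

(* Defs.v *)
From HB Require Import structures.
From mathcomp Require Import all_boot all_order all_algebra all_fingroup.
Set Implicit Arguments.
Unset Strict Implicit.
Unset Printing Implicit Defensive.
Import GRing.Theory.

(* For A : {set 'I_N}, the list of elements of A in increasing order followed
   by the elements of the complement A^c in increasing order
   (enum of a set of ordinals lists them increasingly). *)
Definition ordlist N (A : {set 'I_N}) : seq 'I_N := enum A ++ enum (~: A).

Lemma ordlist_uniq N (A : {set 'I_N}) : uniq (ordlist A).
Proof.
rewrite /ordlist cat_uniq !enum_uniq /= andbT.
by apply/hasPn => x; rewrite !mem_enum in_setC.
Qed.

Lemma ordlist_mem N (A : {set 'I_N}) x : x \in ordlist A.
Proof. by rewrite /ordlist mem_cat !mem_enum in_setC orbN. Qed.

Lemma ordlist_size N (A : {set 'I_N}) : size (ordlist A) = N.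
Proof.
by rewrite /ordlist size_cat -!cardE -cardsUI setUCr setICr cards0 addn0 cardsT card_ord.
Qed.

(* The map sending i_m |-> j_m (m = 1..N), where (i_1..i_N) = ordlist I,
   (j_1..j_N) = ordlist J. *)
Definition match_fun N (I J : {set 'I_N}) (x : 'I_N) : 'I_N :=
  nth x (ordlist J) (index x (ordlist I)).

Lemma match_fun_inj N (I J : {set 'I_N}) : injective (match_fun I J).
Proof.
move=> x y; rewrite /match_fun => Exy.
have hx : index x (ordlist I) < size (ordlist J)
  by rewrite ordlist_size (leq_trans _ (eq_leq (ordlist_size I))) // index_mem ordlist_mem.
have hy : index y (ordlist I) < size (ordlist J)
  by rewrite ordlist_size (leq_trans _ (eq_leq (ordlist_size I))) // index_mem ordlist_mem.
rewrite (set_nth_default x y hy) in Exy.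
have := nth_uniq x hx hy (ordlist_uniq J).
rewrite Exy eqxx => /esym/eqP Ei.
by rewrite -(nth_index x (ordlist_mem I x)) Ei nth_index ?ordlist_mem.
Qed.

Definition match_perm N (I J : {set 'I_N}) : 'S_N := perm (@match_fun_inj N I J).

Definition sgnIJ (R : ringType) N (I J : {set 'I_N}) : R :=
  (-1) ^+ odd_perm (match_perm I J).

(* Main.v *)
Require Import Defs.
From HB Require Import structures.
From mathcomp Require Import all_boot all_order all_algebra all_fingroup.
Import GRing.Theory.
Local Open Scope ring_scope.

Definition pp (R : comRingType) (n1 i : nat) : {poly R} :=
  if (i < n1)%N then 'X^i else ('X - 1%:P)^+n1 * 'X^(i - n1).

Lemma pp_monic (R : comRingType) n1 i : pp R n1 i \is monic.
Proof.
rewrite /pp; case: ifP => _; first exact: monicXn.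
by rewrite monicMl ?monicXn // monic_exp // monicXsubC.
Qed.

Lemma pp_size (R : comRingType) n1 i : size (pp R n1 i) = i.+1.
Proof.
rewrite /pp; case: ifPn => h; first exact: size_polyXn.
rewrite size_monicM ?monic_exp ?monicXsubC ?monic_neq0 ?monicXn //.
rewrite size_exp_XsubC size_polyXn addSn addnS /=.
by rewrite subnKC // leqNgt.
Qed.

Lemma detM_pp (R : comRingType) n n1 (xi : 'I_n -> R) :
  \det (\matrix_(i < n, j < n) (pp R n1 i).[xi j]) =
  \prod_(i < n) \prod_(j < n | (i < j)%N) (xi j - xi i).
Proof.
have -> : \matrix_(i < n, j < n) (pp R n1 i).[xi j] =
   (\matrix_(i < n, l < n) (pp R n1 i)`_l) *m Vandermonde n (\row_j xi j).
  apply/matrixP => i j; rewrite !mxE (@horner_coef_wide _ n); last by rewrite pp_size.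
  by apply: eq_bigr => l _; rewrite !mxE.
rewrite det_mulmx det_Vandermonde det_trig.
  rewrite big1 ?mul1r; first by apply: eq_bigr => i _; apply: eq_bigr => j _; rewrite !mxE.
  move=> i _; rewrite mxE.
  by have /monicP := pp_monic R n1 i; rewrite /lead_coef pp_size.
apply/is_trig_mxP => i j ij; rewrite mxE; apply: nth_default; by rewrite pp_size.
Qed.


Lemma match_memJ N (I J : {set 'I_N}) x : #|I| = #|J| ->
  (match_perm I J x \in J) = (x \in I).
Proof.
move=> cIJ; rewrite permE /match_fun /ordlist index_cat nth_cat -!cardE.
have cC : #|~: I| = #|~: J| by apply/eqP; rewrite -(eqn_add2l #|I|) cardsC cIJ cardsC.
case: (boolP (x \in I)) => xI; rewrite mem_enum; [rewrite xI | rewrite (negbTE xI)].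
  have h : (index x (enum I) < #|J|)%N by rewrite -cIJ cardE index_mem mem_enum.
  by rewrite h -mem_enum mem_nth // -cardE.
rewrite -cIJ ltnNge leq_addr /= addKn.
have h : (index x (enum (~: I)) < #|~: J|)%N by rewrite -cC cardE index_mem mem_enum inE.
apply/negbTE; rewrite -in_setC -mem_enum mem_nth // -cardE //.
Qed.


Lemma prod_if (R : comRingType) n (P : 'I_n -> bool) (F : 'I_n -> R) :
  \prod_i (if P i then F i else 0) = if [forall i, P i] then \prod_i F i else 0.
Proof.
case: (boolP [forall i, P i]) => [/forallP H | /forallPn [i Hi]].
  by apply: eq_bigr => i _; rewrite H.
by rewrite (bigD1 i) //= (negbTE Hi) mul0r.
Qed.

Lemma laplace_gen (R : comRingType) N (I : {set 'I_N}) (M : 'M[R]_N) :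
  \det M = \sum_(J : {set 'I_N} | #|J| == #|I|) sgnIJ R I J *
    \det (\matrix_(i, l) if (i \in I) == (l \in I) then M i (match_perm I J l) else 0).
Proof.
have step : forall J : {set 'I_N}, #|J| == #|I| ->
  sgnIJ R I J *
    \det (\matrix_(i, l) if (i \in I) == (l \in I) then M i (match_perm I J l) else 0)
  = \sum_(s : 'S_N) (if [forall i, (i \in I) == (s i \in J)] then
        (-1) ^+ s * \prod_i M i (s i) else 0).
  move=> J /eqP cJ; set mu := match_perm I J.
  rewrite /determinant mulr_sumr (reindex_inj (mulIg (mu^-1)%g)) /=.
  apply: eq_bigr => s _.
  rewrite odd_permM odd_permV signr_addb /sgnIJ -/mu.
  rewrite mulrCA -mulrA signrMK.
  idtac.
  under eq_bigr do rewrite mxE permM permKV.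
  have E : forall i, (((mu^-1)%g (s i)) \in I) = (s i \in J).
    by move=> i; rewrite -(@match_memJ _ I J _ (esym cJ)) permKV.
  under eq_bigr do rewrite E.
  rewrite prod_if; case: ifP => _; [by [] | by rewrite mulr0].
rewrite (eq_bigr _ step) exchange_big /= /determinant.
apply: eq_bigr => s _.
have cs : #|s @: I| == #|I| by rewrite card_imset //; exact: perm_inj.
rewrite (bigD1 (s @: I)) //= [X in _ + X]big1 ?addr0.
  suff -> : [forall i, (i \in I) == (s i \in s @: I)] by [].
  by apply/forallP => i; rewrite mem_imset //; exact: perm_inj.
move=> J /andP [_ nJ]; case: ifP => // /forallP H.
case/eqP: nJ; apply/setP => y; rewrite -[y](permKV s) mem_imset; last exact: perm_inj.
by rewrite (eqP (H _)).
Qed.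


Definition ordlt n : rel 'I_n := fun x y => (x < y)%N.
Definition ordle n : rel 'I_n := fun x y => (x <= y)%N.

Lemma ordlt_trans n : transitive (@ordlt n).
Proof. by move=> y x z; apply: ltn_trans. Qed.
Lemma ordle_trans n : transitive (@ordle n).
Proof. by move=> y x z; apply: leq_trans. Qed.

Lemma sorted_enum_set n (A : {set 'I_n}) : sorted (@ordlt n) (enum A).
Proof.
rewrite /enum_mem -enumT; apply: sorted_filter; first exact: ordlt_trans.
by have := iota_ltn_sorted 0 n; rewrite -val_enum_ord sorted_map.
Qed.

Lemma nth_lt_iff n (s : seq 'I_n) x0 l m : sorted (@ordlt n) s ->
  (l < size s)%N -> (m < size s)%N ->
  (nth x0 s l < nth x0 s m)%N = (l < m)%N.
Proof.
move=> ss hl hm; case: (ltnP l m) => lm.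
  exact: (sorted_ltn_nth (@ordlt_trans n) x0 ss).
have ss' : sorted (@ordle n) s.
  by apply: sub_sorted ss => x y; apply: ltnW.
have := sorted_leq_nth (@ordle_trans n) (fun x => leqnn x) x0 ss' m l hm hl lm.
by rewrite /ordle leqNgt => /negbTE.
Qed.

Lemma prod_nth1 (R : comRingType) n (s : seq 'I_n) x0 (F : 'I_n -> R) :
  \prod_(i <- s) F i = \prod_(l < size s) F (nth x0 s l).
Proof. by rewrite (big_nth x0) big_mkord. Qed.

Lemma prod_nth2 (R : comRingType) n (s : seq 'I_n) x0 (F : 'I_n -> 'I_n -> R) :
  sorted (@ordlt n) s ->
  \prod_(i <- s) \prod_(j <- s | (i < j)%N) F i j =
  \prod_(l < size s) \prod_(m < size s | (l < m)%N) F (nth x0 s l) (nth x0 s m).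
Proof.
move=> ss; rewrite (big_nth x0) big_mkord; apply: eq_bigr => l _.
rewrite (big_nth x0) big_mkord; apply: eq_bigl => m.
by rewrite nth_lt_iff.
Qed.

Lemma prod_nth1' (R : comRingType) n (s : seq 'I_n) x0 m (F : 'I_n -> R) :
  size s = m -> \prod_(i <- s) F i = \prod_(l < m) F (nth x0 s l).
Proof. by move=> <-; apply: prod_nth1. Qed.

Lemma prod_nth2' (R : comRingType) n (s : seq 'I_n) x0 m (F : 'I_n -> 'I_n -> R) :
  sorted (@ordlt n) s -> size s = m ->
  \prod_(i <- s) \prod_(j <- s | (i < j)%N) F i j =
  \prod_(l < m) \prod_(m0 < m | (l < m0)%N) F (nth x0 s l) (nth x0 s m0).
Proof. by move=> ss <-; apply: prod_nth2. Qed.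


Lemma sorted_enum_ord n : sorted (@ordlt n) (enum 'I_n).
Proof. by have := iota_ltn_sorted 0 n; rewrite -val_enum_ord sorted_map. Qed.

Definition Iset n1 n2 := [set i : 'I_(n1 + n2) | (n1 <= i)%N].

Lemma enumI n1 n2 : enum (Iset n1 n2) = map (@rshift n1 n2) (enum 'I_n2).
Proof.
apply: (irr_sorted_eq (@ordlt_trans _)).
- by move=> x; rewrite /ordlt ltnn.
- exact: sorted_enum_set.
- rewrite sorted_map; have := sorted_enum_ord n2.
  apply: sub_sorted => x y.
  by rewrite /ordlt /= /relpre /= ltn_add2l.
move=> x; rewrite mem_enum inE; case: (splitP x) => j xj.
  rewrite xj leqNgt ltn_ord /=; apply/esym/mapP => [[y _]] /(congr1 val) /= E.
  by have := ltn_ord j; rewrite -xj E ltnNge leq_addr.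
rewrite xj leq_addr; apply/esym/mapP; exists j; rewrite ?mem_enum //; exact: val_inj.
Qed.

Lemma enumIC n1 n2 : enum (~: Iset n1 n2) = map (@lshift n1 n2) (enum 'I_n1).
Proof.
apply: (irr_sorted_eq (@ordlt_trans _)).
- by move=> x; rewrite /ordlt ltnn.
- exact: sorted_enum_set.
- rewrite sorted_map; exact: sorted_enum_ord.
move=> x; rewrite mem_enum !inE; case: (splitP x) => j xj.
  rewrite xj leqNgt ltn_ord /=; apply/esym/mapP; exists j; rewrite ?mem_enum //; exact: val_inj.
rewrite xj leq_addr /=; apply/esym/mapP => [[y _]] /(congr1 val) /= E.
by have := ltn_ord y; rewrite -E xj ltnNge leq_addr.
Qed.

Lemma cardI n1 n2 : #|Iset n1 n2| = n2.
Proof. by rewrite cardE enumI size_map size_enum_ord. Qed.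

Lemma mu_r n1 n2 (J : {set 'I_(n1 + n2)}) x0 l : #|J| = n2 ->
  match_perm (Iset n1 n2) J (rshift n1 l) = nth x0 (enum J) l.
Proof.
move=> cJ; rewrite permE /match_fun /ordlist enumI enumIC index_cat.
rewrite map_f ?mem_enum // index_map ?index_enum_ord; last exact: rshift_inj.
rewrite nth_cat -cardE cJ ltn_ord; apply: set_nth_default; by rewrite -cardE cJ.
Qed.

Lemma mu_l n1 n2 (J : {set 'I_(n1 + n2)}) x0 l : #|J| = n2 ->
  match_perm (Iset n1 n2) J (lshift n2 l) = nth x0 (enum (~: J)) l.
Proof.
move=> cJ; rewrite permE /match_fun /ordlist enumI enumIC index_cat.
have -> : (lshift n2 l \in map (@rshift n1 n2) (enum 'I_n2)) = false.
  by rewrite -enumI mem_enum inE /= leqNgt ltn_ord.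
rewrite size_map size_enum_ord index_map ?index_enum_ord; last exact: lshift_inj.
rewrite nth_cat -cardE cJ ltnNge leq_addr /= addKn.
apply: set_nth_default; rewrite -cardE.
have := cardsC J; rewrite cJ card_ord => /eqP; rewrite addnC eqn_add2r => /eqP ->.
exact: ltn_ord.
Qed.


Theorem corollary2p4 (R : comRingType) (N k : nat) (xi : 'I_N -> R) :
  (1 <= N)%N -> (k <= N)%N ->
  let I := [set i : 'I_N | (N - k <= i)%N] in
  \sum_(J : {set 'I_N} | #|J| == k)
     sgnIJ R I J
     * \prod_(i in J) (xi i - 1) ^+ (N - k)
     * \prod_(i in J) \prod_(j in J | (i < j)%N) (xi j - xi i)
     * \prod_(i in ~: J) \prod_(j in ~: J | (i < j)%N) (xi j - xi i)
  = \prod_(i : 'I_N) \prod_(j : 'I_N | (i < j)%N) (xi j - xi i).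
Proof.
move=> N1 kN.
have [n1 eN] : exists n1, N = (n1 + k)%N by exists (N - k)%N; rewrite subnK.
subst N; rewrite /= addnK.
rewrite (_ : [set i : 'I_(n1 + k) | (n1 <= i)%N] = Iset n1 k) //.
set x0 : 'I_(n1 + k) := Ordinal N1.
rewrite -(detM_pp R (n1 + k) n1 xi) (@laplace_gen R _ (Iset n1 k)) cardI.
apply: eq_bigr => J /eqP cJ; rewrite -!mulrA; congr (_ * _).
set M := \matrix_(i, j) (pp R n1 i).[xi j].
set mu := match_perm (Iset n1 k) J.
have cJc : size (enum (~: J)) = n1.
  rewrite -cardE; have := cardsC J; rewrite cJ card_ord => /eqP.
  by rewrite addnC eqn_add2r => /eqP.
have cJs : size (enum J) = k by rewrite -cardE.
set a := fun l : 'I_n1 => nth x0 (enum (~: J)) l.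
set b := fun l : 'I_k => nth x0 (enum J) l.
have -> : \matrix_(i, l) (if (i \in Iset n1 k) == (l \in Iset n1 k) then M i (mu l) else 0)
   = block_mx (Vandermonde n1 (\row_l xi (a l))) 0 0
       (Vandermonde k (\row_l xi (b l)) *m diag_mx (\row_l (xi (b l) - 1) ^+ n1)).
  apply/matrixP => i j; rewrite mxE -(splitK i) -(splitK j).
  have inl_ : forall l : 'I_n1, (lshift k l \in Iset n1 k) = false.
    by move=> l; rewrite inE /= leqNgt ltn_ord.
  have inr_ : forall l : 'I_k, (rshift n1 l \in Iset n1 k) = true.
    by move=> l; rewrite inE /= leq_addr.
  case: (split i) => i'; case: (split j) => j' /=;
    rewrite ?block_mxEul ?block_mxEur ?block_mxEdl ?block_mxEdr ?inl_ ?inr_ /= ?mul_mx_diag ?mxE //.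
    rewrite /mu (@mu_l n1 k J x0) // /pp /= ltn_ord hornerXn.
    by rewrite /a.
  rewrite /mu (@mu_r n1 k J x0) // /pp /= ltnNge leq_addr /= addKn.
  rewrite hornerM horner_exp hornerXsubC hornerXn mulrC.
  by rewrite /b.
have hA : \prod_(i < n1) \prod_(j < n1 | (i < j)%N)
      ((\row_l xi (a l)) 0 j - (\row_l xi (a l)) 0 i)
    = \prod_(i in ~: J) \prod_(j in ~: J | (i < j)%N) (xi j - xi i).
  rewrite (eq_bigr (fun i : 'I_(n1 + k) => \prod_(j <- enum (~: J) | (i < j)%N) (xi j - xi i)));
    last by move=> i _; rewrite big_enum_cond.
  rewrite -[X in _ = X]big_enum.
  symmetry; etransitivity; first exact: (@prod_nth2' R _ _ x0 n1 (fun i j => xi j - xi i) (sorted_enum_set _ _) cJc).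
  by apply: eq_bigr => i _; apply: eq_bigr => j _; rewrite !mxE.
have hB : \prod_(i < k) \prod_(j < k | (i < j)%N)
      ((\row_l xi (b l)) 0 j - (\row_l xi (b l)) 0 i)
    = \prod_(i in J) \prod_(j in J | (i < j)%N) (xi j - xi i).
  rewrite (eq_bigr (fun i : 'I_(n1 + k) => \prod_(j <- enum J | (i < j)%N) (xi j - xi i)));
    last by move=> i _; rewrite big_enum_cond.
  rewrite -[X in _ = X]big_enum.
  symmetry; etransitivity; first exact: (@prod_nth2' R _ _ x0 k (fun i j => xi j - xi i) (sorted_enum_set _ _) cJs).
  by apply: eq_bigr => i _; apply: eq_bigr => j _; rewrite !mxE.
have hD : \prod_i (\row_l (xi (b l) - 1) ^+ n1) 0 i = \prod_(i in J) (xi i - 1) ^+ n1.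
  rewrite -[X in _ = X]big_enum; symmetry; etransitivity;
    first exact: (@prod_nth1' R _ _ x0 k (fun i => (xi i - 1) ^+ n1) cJs).
  by apply: eq_bigr => i _; rewrite !mxE.
rewrite det_ublock det_mulmx !det_Vandermonde det_diag hA hB hD.
by rewrite mulrCA [in RHS]mulrCA [X in _ * X = _]mulrC.
Qed.
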